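(* Let $(\mathcal Z,\mathcal W,\phi)$ be a state-flux triple, $\mathcal L$ an L-function on $\mathcal Z$ and $\mathcal V$ a quasipotential corresponding to $\mathcal L$. Then for all $\rho\in\mathrm{Dom}(F^{\mathrm{asym}})$ and $j\in T_\rho\mathcal W$, $$\mathcal L(\rho,j)=\Phi(\rho,j)+\Phi^*(\rho,F^{\mathrm{asym}}(\rho))-\langle F^{\mathrm{asym}}(\rho),j\rangle+\Phi^*_{F^{\mathrm{asym}}(\rho)}(\rho,F^{\mathrm{sym}}(\rho))-\langle F^{\mathrm{sym}}(\rho),j\rangle,$$ and for all $\rho\in\mathrm{Dom}_{\mathrm{symdiss}}(F^{\mathrm{asym}})$ and $j\in T_\rho\mathcal W$, $$\mathcal L(\rho,j)=\Phi(\rho,j)+\Phi^*(\rho,F^{\mathrm{sym}}(\rho))-\langle F^{\mathrm{sym}}(\rho),j\rangle+\Phi^*_{F^{\mathrm{sym}}(\rho)}(\rho,F^{\mathrm{asym}}(\rho))-\langle F^{\mathrm{asym}}(\rho),j\rangle.$$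
   Context: A state-flux triple $(\mathcal Z,\mathcal W,\phi)$ consists of differentiable Banach manifolds $\mathcal Z$, $\mathcal W$ and a surjective differentiable map $\phi:\mathcal W\to\mathcal Z$ such that: $T_w\mathcal W$ depends on $w$ only through $\rho=\phi[w]$ (written $T_\rho\mathcal W$); the differential of $\phi$ is a bounded linear map depending only on $\rho$, written $d\phi_\rho:T_\rho\mathcal W\to T_\rho\mathcal Z$; $T_\rho\mathcal W$, $T_\rho\mathcal Z$ have Banach preduals $T^*_\rho\mathcal W$, $T^*_\rho\mathcal Z$ with pairings $\langle\cdot,\cdot\rangle$; $d\phi_\rho^{\mathsf T}$ is the adjoint. An L-function on $\mathcal Z$ is $\mathcal L:\{(\rho,j):\rho\in\mathcal Z,j\in T_\rho\mathcal W\}\to\mathbb R\cup\{\infty\}$ such that for each $\rho$, $\inf\mathcal L(\rho,\cdot)=0$, there is a unique $j^0(\rho)$ with $\mathcal L(\rho,j^0(\rho))=0$, and $\mathcal L(\rho,\cdot)$ is convex and lower semicontinuous; $\mathcal H(\rho,\zeta)=\sup_j\{\langle\zeta,j\rangle-\mathcal L(\rho,j)\}$. A quasipotential is $\mathcal V:\mathcal Z\to\mathbb R\cup\{\infty\}$ with $\inf\mathcal V=0$ and $\mathcal H(\rho,d\phi_\rho^{\mathsf T}d\mathcal V(\rho))=0$ wherever the Gateaux derivative $d\mathcal V(\rho)$ exists. $\mathrm{Dom}(F)$: set of $\rho$ where $j\mapsto\mathcal L(\rho,j)$ is Gateaux differentiable at $0$, $F(\rho):=-d\mathcal L(\rho,0)$;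 $\Phi^*(\rho,\zeta):=\mathcal H(\rho,\zeta-F(\rho))-\mathcal H(\rho,-F(\rho))$, $\Phi(\rho,j):=\sup_\zeta\{\langle\zeta,j\rangle-\Phi^*(\rho,\zeta)\}$. $\mathrm{Dom}_{\mathrm{symdiss}}(F):=\{\rho\in\mathrm{Dom}(F):\mathcal H(\rho,\zeta-F(\rho))=\mathcal H(\rho,-\zeta-F(\rho))\ \forall\zeta\}$. $\mathrm{Dom}(F^{\mathrm{sym}})$: set where $\mathcal V$ is Gateaux differentiable, $F^{\mathrm{sym}}(\rho):=-\frac12d\phi_\rho^{\mathsf T}d\mathcal V(\rho)$; $\mathrm{Dom}(F^{\mathrm{asym}}):=\mathrm{Dom}(F)\cap\mathrm{Dom}(F^{\mathrm{sym}})$, $F^{\mathrm{asym}}:=F-F^{\mathrm{sym}}$; $\mathrm{Dom}_{\mathrm{symdiss}}(F^{\mathrm{asym}}):=\mathrm{Dom}(F^{\mathrm{asym}})\cap\mathrm{Dom}_{\mathrm{symdiss}}(F)$. Modified dissipation potential: $\Phi^*_{\zeta^2}(\rho,\zeta^1):=\frac12[\Phi^*(\rho,\zeta^1+\zeta^2)+\Phi^*(\rho,-\zeta^1+\zeta^2)]-\Phi^*(\rho,\zeta^2)$.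
   Formalization: Lower semicontinuity of $\mathcal L(\rho,\cdot)$ in the definition of an L-function is taken with respect to the weak-* topology on $T_\rho\mathcal W$ induced by the predual $T^*_\rho\mathcal W$, rather than the norm topology. The statement above fails without it. *)

(* Defs.v *)
From HB Require Import structures.
From mathcomp Require Import all_boot all_order all_algebra.
From mathcomp Require Import all_classical all_reals all_analysis.
Set Implicit Arguments. Unset Strict Implicit. Unset Printing Implicit Defensive.
Import Order.TTheory GRing.Theory Num.Theory.
Import numFieldNormedType.Exports.
Local Open Scope classical_set_scope.
Local Open Scope ring_scope.

(* [is_predual p] : Xs is a Banach predual of X via the pairing
   p : Xs -> X -> R, i.e. x |-> p(.,x) is a linear isometric
   isomorphism of X onto the (norm) dual of Xs.                        *)
Definition is_predual (R : realType) (Xs X : completeNormedModType R)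
  (p : Xs -> X -> R) : Prop :=
  [/\ (forall (a : R) (z1 z2 : Xs) (x : X), p (a *: z1 + z2) x = a * p z1 x + p z2 x),
      (forall (a : R) (z : Xs) (x1 x2 : X), p z (a *: x1 + x2) = a * p z x1 + p z x2),
      (* isometry : ||x|| = sup_{||z||<=1} |p z x| *)
      (forall (z : Xs) (x : X), `|p z x| <= `|z| * `|x|),
      (forall (x : X) (e : R), 0 < e ->
          exists z : Xs, `|z| <= 1 /\ `|x| - e < `|p z x|) &
      (forall f : Xs -> R,
          (forall (a : R) (z1 z2 : Xs), f (a *: z1 + z2) = a * f z1 + f z2) ->
          continuous f ->
          exists x : X, forall z, f z = p z x)].

(* The manifolds Z and W enter only through their
   tangent spaces T_rho Z, T_rho W (which depend on the base point of Z
   only), their preduals, the differential d phi_rho and its adjoint,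
   and the notion of Gateaux derivative of functions Z -> \bar R, whose
   values lie in the predual T*_rho Z (field [gderivZ]).               *)
Record state_flux_triple (R : realType) := StateFluxTriple {
  sZ : Type;
  sW : Type;
  sphi : sW -> sZ;
  sphi_surj : forall z : sZ, exists w : sW, sphi w = z;
  TZ : sZ -> completeNormedModType R;
  TW : sZ -> completeNormedModType R;
  TZs : sZ -> completeNormedModType R;
  TWs : sZ -> completeNormedModType R;
  pZ : forall rho, TZs rho -> TZ rho -> R;
  pW : forall rho, TWs rho -> TW rho -> R;
  pZ_predual : forall rho, @is_predual R (TZs rho) (TZ rho) (@pZ rho);
  pW_predual : forall rho, @is_predual R (TWs rho) (TW rho) (@pW rho);
  dphi : forall rho, TW rho -> TZ rho;
  dphi_linear : forall rho (a : R) (j1 j2 : TW rho),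
      @dphi rho (a *: j1 + j2) = a *: @dphi rho j1 + @dphi rho j2;
  dphi_bounded : forall rho, continuous (@dphi rho);
  dphiT : forall rho, TZs rho -> TWs rho;
  dphiT_adjoint : forall rho (z : TZs rho) (j : TW rho),
      @pW rho (@dphiT rho z) j = @pZ rho z (@dphi rho j);
  (* Gateaux derivative on the manifold Z: [gderivZ V rho z] means that
     V is Gateaux differentiable at rho with dV(rho) = z in T*_rho Z. *)
  gderivZ : (sZ -> \bar R) -> forall rho, TZs rho -> Prop;
  gderivZ_unique : forall V rho (z1 z2 : TZs rho),
      @gderivZ V rho z1 -> @gderivZ V rho z2 -> z1 = z2
}.

Arguments sZ {R} s.
Arguments sW {R} s.
Arguments sphi {R} s.
Arguments TZ {R} s rho.
Arguments TW {R} s rho.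
Arguments TZs {R} s rho.
Arguments TWs {R} s rho.
Arguments pW {R} s {rho}.
Arguments pZ {R} s {rho}.
Arguments dphi {R} s {rho}.
Arguments dphiT {R} s {rho}.
Arguments gderivZ {R} s V rho.

Section Lfun.
Variables (R : realType) (S : state_flux_triple R).
Local Open Scope ereal_scope.

Definition convexW rho (f : TW S rho -> \bar R) : Prop :=
  forall (t : R) (j1 j2 : TW S rho), (0 < t < 1)%R ->
    f (t *: j1 + (1 - t) *: j2)%R <= t%:E * f j1 + (1 - t)%:E * f j2.

(* lower semicontinuity w.r.t. the weak-* topology sigma(T_rho W, T*_rho W) *)
Definition lscW rho (f : TW S rho -> \bar R) : Prop :=
  forall (j : TW S rho) (c : R), c%:E < f j ->
    exists (s : seq (TWs S rho)) (d : R), (0 < d)%R /\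
      forall j' : TW S rho, (forall z, z \in s -> (`|pW S z (j' - j)%R| < d)%R) ->
        c%:E < f j'.

Definition is_Lfunction (L : forall rho, TW S rho -> \bar R) : Prop :=
  forall rho,
  [/\ ereal_inf (range (L rho)) = 0,
      exists! j : TW S rho, L rho j = 0,
      convexW (L rho) & lscW (L rho)].

Definition Hf (L : forall rho, TW S rho -> \bar R) rho (z : TWs S rho) : \bar R :=
  ereal_sup (range (fun j : TW S rho => (pW S z j)%:E - L rho j)).

Definition is_quasipotential (L : forall rho, TW S rho -> \bar R)
  (V : sZ S -> \bar R) : Prop :=
  ereal_inf (range V) = 0 /\
  forall rho (z : TZs S rho), gderivZ S V rho z -> Hf L (dphiT S z) = 0.

(* j |-> L(rho, j) is Gateaux differentiable at 0 with derivative
   z in T*_rho W, i.e. rho \in Dom(F) and F(rho) = - z. *)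
Definition LGateaux0 (L : forall rho, TW S rho -> \bar R) rho (z : TWs S rho) : Prop :=
  forall v : TW S rho,
    (fun h : R => (L rho (h *: v)%R - L rho 0%R) * (h^-1)%:E) @ 0%R^'
      --> (pW S z v)%:E.

Definition PhiS (L : forall rho, TW S rho -> \bar R) rho (F z : TWs S rho) : \bar R :=
  Hf L (z - F)%R - Hf L (- F)%R.

Definition Phi (L : forall rho, TW S rho -> \bar R) rho (F : TWs S rho)
  (j : TW S rho) : \bar R :=
  ereal_sup (range (fun z : TWs S rho => (pW S z j)%:E - PhiS L F z)).

Definition PhiSmod (L : forall rho, TW S rho -> \bar R) rho (F z2 z1 : TWs S rho)
  : \bar R :=
  (2^-1)%:E * (PhiS L F (z1 + z2)%R + PhiS L F (- z1 + z2)%R) - PhiS L F z2.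

Definition symdiss (L : forall rho, TW S rho -> \bar R) rho (F : TWs S rho) : Prop :=
  forall z : TWs S rho, Hf L (z - F)%R = Hf L (- z - F)%R.

End Lfun.

(* Main.v *)
Require Import Defs.
From HB Require Import structures.
From mathcomp Require Import all_boot all_order all_algebra.
From mathcomp Require Import all_classical all_reals all_analysis.
From mathcomp Require Import ring lra.
Import Order.TTheory GRing.Theory Num.Theory.
Import numFieldNormedType.Exports.


Module Helpers.
Local Open Scope classical_set_scope.
Local Open Scope ring_scope.
Section HBfin.
Variables (R : realType) (n : nat) (p : ('I_n -> R) -> R).
Hypothesis pconv : forall (t : R) (y1 y2 : 'I_n -> R), 0 < t < 1 ->
  p (fun i => t * y1 i + (1 - t) * y2 i) <= t * p y1 + (1 - t) * p y2.

Let z0 := fun _ : 'I_n => (0 : R).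
Let aff (a : 'I_n -> R) (y : 'I_n -> R) := p z0 + \sum_i a i * y i.

Lemma aff_mix a l (m1 m2 : 'I_n -> R) :
  aff a (fun i => l * m1 i + (1 - l) * m2 i) = l * aff a m1 + (1 - l) * aff a m2.
Proof.
rewrite /aff !mulrDr !mulr_sumr.
have -> : \sum_i a i * (l * m1 i + (1 - l) * m2 i) =
   \sum_i (l * (a i * m1 i)) + \sum_i ((1 - l) * (a i * m2 i)).
  by rewrite -big_split /=; apply: eq_bigr => i _; ring.
ring.
Qed.

Lemma HB_k k : (k <= n)%N -> exists a, forall y : 'I_n -> R,
  (forall i : 'I_n, (k <= i)%N -> y i = 0) -> aff a y <= p y.
Proof.
elim: k => [_|k IH kn].
  exists (fun _ => 0) => y y0.
  have -> : y = z0 by apply: funext => i; rewrite y0.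
  by rewrite /aff big1 ?addr0 // => i _; rewrite mul0r.
have [a Ha] := IH (ltnW kn).
pose kk : 'I_n := Ordinal kn.
pose e := fun i : 'I_n => if i == kk then (1 : R) else 0.
pose v := fun (m : 'I_n -> R) (t : R) => fun i => m i + t * e i.
pose Mk := fun m : 'I_n -> R => forall i : 'I_n, (k <= i)%N -> m i = 0.
have key : forall m1 (s : R) m2 (t : R), Mk m1 -> Mk m2 -> 0 < s -> 0 < t ->
    (aff a m1 - p (v m1 (- s))) / s <= (p (v m2 t) - aff a m2) / t.
  move=> m1 s m2 t M1 M2 s0 t0.
  pose l := t / (s + t).
  have st0 : 0 < s + t by rewrite addr_gt0.
  have l01 : 0 < l < 1.
    apply/andP; split; first by rewrite divr_gt0.
    by rewrite ltr_pdivrMr // mul1r ltrDr.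
  have := @pconv l (v m1 (- s)) (v m2 t) l01.
  have -> : (fun i => l * v m1 (- s) i + (1 - l) * v m2 t i) =
            (fun i => l * m1 i + (1 - l) * m2 i).
    apply: funext => i; rewrite /v /l; field.
    by rewrite gt_eqF.
  move=> Hp.
  have Ham : aff a (fun i => l * m1 i + (1 - l) * m2 i) <=
             p (fun i => l * m1 i + (1 - l) * m2 i).
    apply: Ha => i ki; rewrite M1 // M2 //; ring.
  rewrite aff_mix in Ham.
  have H : l * (aff a m1 - p (v m1 (- s))) <= (1 - l) * (p (v m2 t) - aff a m2).
    lra.
  have pos : 0 <= (s + t) / (s * t) by rewrite divr_ge0 // ?mulr_ge0 // ltW.
  have e1 : (aff a m1 - p (v m1 (- s))) / s =
      (l * (aff a m1 - p (v m1 (- s)))) * ((s + t) / (s * t)).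
    rewrite /l; field; rewrite ?gt_eqF //.
  have e2 : (p (v m2 t) - aff a m2) / t =
      ((1 - l) * (p (v m2 t) - aff a m2)) * ((s + t) / (s * t)).
    rewrite /l; field; rewrite ?gt_eqF //.
  by rewrite e1 e2 ler_wpM2r.
pose Lo := [set x : R | exists m s, [/\ Mk m, 0 < s &
               x = (aff a m - p (v m (- s))) / s]].
have Mz : Mk z0 by [].
have Lo0 : Lo !=set0 by exists ((aff a z0 - p (v z0 (- 1))) / 1), z0, 1.
have Loub : has_ubound Lo.
  exists ((p (v z0 1) - aff a z0) / 1) => x [m [s [Mm s0 ->]]].
  exact: key.
pose g := sup Lo.
have lo_g : forall m s, Mk m -> 0 < s -> (aff a m - p (v m (- s))) / s <= g.
  move=> m s Mm s0; apply: ub_le_sup => //; by exists m, s.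
have g_up : forall m t, Mk m -> 0 < t -> g <= (p (v m t) - aff a m) / t.
  move=> m t Mm t0; apply: ge_sup => // x [m' [s [Mm' s0 ->]]]; exact: key.
exists (fun i => if i == kk then g else a i) => y Hy.
pose m := fun i => if i == kk then 0 else y i.
have Mm : Mk m.
  move=> i ki; rewrite /m; case: ifP => // /negbT ik.
  apply: Hy; rewrite ltn_neqAle ki andbT.
  apply: contra ik => /eqP ik; apply/eqP/val_inj => /=; by [].
set t := y kk.
have yv : y = v m t.
  apply: funext => i; rewrite /v /m /e; case: ifP => [/eqP -> | _].
    by rewrite add0r mulr1.
  by rewrite mulr0 addr0.
have affy : aff (fun i => if i == kk then g else a i) y = aff a m + t * g.
  rewrite /aff (bigD1 kk) //= eqxx [in RHS](bigD1 kk) //= /m eqxx mulr0 add0r.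
  have -> : \sum_(i | i != kk) (if i == kk then g else a i) * y i =
            \sum_(i | i != kk) a i * (if i == kk then 0 else y i).
    by apply: eq_bigr => i /negbTE ->.
  rewrite -/t; ring.
rewrite affy yv.
have [t0|t0|t0] := ltgtP t 0.
- have s0 : 0 < - t by rewrite oppr_gt0.
  have := lo_g m (- t) Mm s0; rewrite opprK.
  rewrite ler_pdivrMr // => H; nra.
- have := g_up m t Mm t0; rewrite ler_pdivlMr // => H; nra.
- rewrite t0 mul0r addr0.
  have -> : v m 0 = m by apply: funext => i; rewrite /v mul0r addr0.
  exact: Ha.
Qed.

Lemma HB_fin : exists a, forall y, p z0 + \sum_i a i * y i <= p y.
Proof.
have [a Ha] := @HB_k n (leqnn n); exists a => y; apply: Ha => i ni.
by move: (ltn_ord i); rewrite ltnNge ni.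
Qed.

End HBfin.
Lemma near0'_pos (R : realType) (P : R -> Prop) :
  (\forall h \near 0^', P h) -> exists h : R, 0 < h < 1 /\ P h.
Proof.
move=> /nbhs_ballP [e e0 He].
have {}e0 : 0 < (e : R) by [].
pose h : R := Num.min (e / 2) (1 / 2).
have h0 : 0 < h by rewrite lt_min; apply/andP; split; lra.
have h1 : h < e by rewrite gt_min; apply/orP; left; lra.
have h2 : h < 1 by rewrite gt_min; apply/orP; right; lra.
exists h; split; first by rewrite h0 h2.
apply: He; last by rewrite gt_eqF.
by rewrite /ball /= sub0r normrN ger0_norm // ltW.
Qed.

Lemma cvg_gt_near (R : realType) (f : R -> \bar R) (l q : R) :
  f @ 0^' --> l%:E -> q < l -> \forall h \near 0^', (q%:E < f h)%E.
Proof.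
move=> Hc ql; apply: (Hc [set y | (q%:E < y)%E]); apply: open_nbhs_nbhs; split.
  exact: open_ereal_gt_ereal.
by rewrite /= lte_fin.
Qed.
Section Pair.
Variables (R : realType) (S : state_flux_triple R) (rho : sZ S).
Local Notation X := (TW S rho).
Local Notation Xs := (TWs S rho).
Local Notation pp := (@pW R S rho).

Lemma pp_lin1 a (z1 z2 : Xs) x : pp (a *: z1 + z2) x = a * pp z1 x + pp z2 x.
Proof. by case: (@pW_predual R S rho). Qed.
Lemma pp_lin2 a (z : Xs) (x1 x2 : X) : pp z (a *: x1 + x2) = a * pp z x1 + pp z x2.
Proof. by case: (@pW_predual R S rho). Qed.

Lemma pp0l x : pp 0 x = 0.
Proof.
have := pp_lin1 1 0 0 x; rewrite scaler0 addr0 mul1r => H.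
by apply: (addrI (pp 0 x)); rewrite addr0 -H.
Qed.
Lemma pp0r z : pp z 0 = 0.
Proof.
have := pp_lin2 1 z 0 0; rewrite scaler0 addr0 mul1r => H.
by apply: (addrI (pp z 0)); rewrite addr0 -H.
Qed.
Lemma ppDl z1 z2 x : pp (z1 + z2) x = pp z1 x + pp z2 x.
Proof. by rewrite -[z1]scale1r pp_lin1 mul1r scale1r. Qed.
Lemma ppZl a z x : pp (a *: z) x = a * pp z x.
Proof. by rewrite -[a *: z]addr0 pp_lin1 pp0l addr0. Qed.
Lemma ppNl z x : pp (- z) x = - pp z x.
Proof. by rewrite -scaleN1r ppZl mulN1r. Qed.
Lemma ppBl z1 z2 x : pp (z1 - z2) x = pp z1 x - pp z2 x.
Proof. by rewrite ppDl ppNl. Qed.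
Lemma ppDr z x1 x2 : pp z (x1 + x2) = pp z x1 + pp z x2.
Proof. by rewrite -[x1]scale1r pp_lin2 mul1r scale1r. Qed.
Lemma ppZr a z x : pp z (a *: x) = a * pp z x.
Proof. by rewrite -[a *: x]addr0 pp_lin2 pp0r addr0. Qed.
Lemma ppNr z x : pp z (- x) = - pp z x.
Proof. by rewrite -scaleN1r ppZr mulN1r. Qed.
Lemma ppBr z x1 x2 : pp z (x1 - x2) = pp z x1 - pp z x2.
Proof. by rewrite ppDr ppNr. Qed.

Lemma pp_sum n (F : 'I_n -> Xs) x : pp (\sum_i F i) x = \sum_i pp (F i) x.
Proof.
apply: (big_ind2 (fun u v => pp u x = v)); first exact: pp0l.
  by move=> ? ? ? ? <- <-; rewrite ppDl.
by [].
Qed.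

End Pair.

Section Biconj.
Variables (R : realType) (S : state_flux_triple R) (rho : sZ S).
Local Notation X := (TW S rho).
Local Notation Xs := (TWs S rho).
Local Notation pp := (@pW R S rho).
Variable f : X -> \bar R.
Hypotheses (f0 : forall x, (0 <= f x)%E) (fj0 : exists j0, f j0 = 0%E)
  (fconv : convexW f) (flsc : lscW f).

Lemma biconj j (c : R) : (c%:E < f j)%E ->
  exists xi : Xs, forall x, ((pp xi x)%:E - f x <= (pp xi j - c)%:E)%E.
Proof.
move=> cfj.
have [s [d [d0 Hs]]] := flsc j c cfj.
pose n := size s.
pose zz := fun i : 'I_n => nth 0 s i.
pose T := fun x (i : 'I_n) => pp (zz i) (x - j).
pose M := `|c| / d.
have M0 : 0 <= M by rewrite divr_ge0 // ltW.
pose term := fun (y : 'I_n -> R) x => (f x + (M * \sum_i `|y i - T x i|)%:E)%E.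
pose g := fun y => ereal_inf (range (term y)).
have [j0 fj0'] := fj0.
have g_ge0 : forall y, (0 <= g y)%E.
  move=> y; apply: le_ereal_inf_tmp => _ [x _ <-]; apply: adde_ge0 => //.
  by rewrite lee_fin mulr_ge0 // sumr_ge0 // => i _.
have g_fin : forall y, g y \is a fin_num.
  move=> y; rewrite ge0_fin_numE ?g_ge0 //.
  apply: (le_lt_trans (ereal_inf_lbound _)); first by exists j0.
  by rewrite /term fj0' add0e ltry.
pose pr := fun y => fine (g y).
have gE : forall y, g y = (pr y)%:E by move=> y; rewrite fineK.
have prconv : forall (t : R) (y1 y2 : 'I_n -> R), 0 < t < 1 ->
    pr (fun i => t * y1 i + (1 - t) * y2 i) <= t * pr y1 + (1 - t) * pr y2.
  move=> t y1 y2 /andP[t0 t1]; apply/ler_addgt0Pr => eps eps0.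
  have : (g y1 < (pr y1 + eps)%:E)%E by rewrite gE lte_fin ltrDl.
  move=> /ereal_inf_lt [_ [x1 _ <-]] H1.
  have : (g y2 < (pr y2 + eps)%:E)%E by rewrite gE lte_fin ltrDl.
  move=> /ereal_inf_lt [_ [x2 _ <-]] H2.
  have [r1 fx1] : exists r1, f x1 = r1%:E.
    move: H1 (f0 x1); rewrite /term; case: (f x1) => [r| |] //=; by exists r.
  have [r2 fx2] : exists r2, f x2 = r2%:E.
    move: H2 (f0 x2); rewrite /term; case: (f x2) => [r| |] //=; by exists r.
  rewrite /term fx1 -EFinD lte_fin in H1.
  rewrite /term fx2 -EFinD lte_fin in H2.
  pose x := t *: x1 + (1 - t) *: x2.
  have Hfx : (f x <= (t * r1 + (1 - t) * r2)%:E)%E.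
    have := fconv t x1 x2 (introT andP (conj t0 t1)).
    by rewrite fx1 fx2 -!EFinM -EFinD.
  have Tx : forall i, T x i = t * T x1 i + (1 - t) * T x2 i.
    move=> i; rewrite /T /x !ppBr !ppDr !ppZr; ring.
  have t1' : 0 <= 1 - t by rewrite subr_ge0 ltW.
  have Nx : \sum_i `|(t * y1 i + (1 - t) * y2 i) - T x i| <=
      t * \sum_i `|y1 i - T x1 i| + (1 - t) * \sum_i `|y2 i - T x2 i|.
    rewrite !mulr_sumr -big_split /=; apply: ler_sum => i _.
    rewrite Tx.
    have -> : t * y1 i + (1 - t) * y2 i - (t * T x1 i + (1 - t) * T x2 i) =
       t * (y1 i - T x1 i) + (1 - t) * (y2 i - T x2 i) by ring.
    apply: (le_trans (ler_normD _ _)).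
    by rewrite !normrM (ger0_norm (ltW t0)) (ger0_norm t1').
  pose mix := fun i => t * y1 i + (1 - t) * y2 i.
  have : (g mix <= term mix x)%E.
    by apply: ereal_inf_lbound; exists x.
  rewrite gE /term => Hg.
  have := le_trans Hg (leeD2r _ Hfx); rewrite -EFinD lee_fin => Hg2.
  have HM := ler_wpM2l M0 Nx.
  rewrite -/mix.
  have E1 : t * (r1 + M * \sum_i `|y1 i - T x1 i|) < t * (pr y1 + eps).
    by rewrite ltr_pM2l.
  have E2 : (1 - t) * (r2 + M * \sum_i `|y2 i - T x2 i|) <= (1 - t) * (pr y2 + eps).
    by apply: ler_wpM2l => //; apply: ltW.
  lra.
have [a Ha] := @HB_fin R n pr prconv.
have pr0 : c <= pr (fun _ => 0).
  rewrite -lee_fin -gE; apply: le_ereal_inf_tmp => _ [x _ <-]; rewrite /term.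
  case: (pselect (forall i : 'I_n, `|T x i| < d)) => [Hall | Hn].
    have cf : (c%:E < f x)%E.
      apply: Hs => z zs; have /(nthP 0) [i ilt <-] := zs.
      exact: (Hall (Ordinal ilt)).
    apply: le_trans (ltW cf) _; apply: leeDl.
    by rewrite lee_fin mulr_ge0 // sumr_ge0.
  have [i Hi] := (existsNP _).2 Hn.
  have Hi' : d <= `|T x i| by rewrite leNgt; apply/negP.
  have Hsum : `|T x i| <= \sum_k `|0 - T x k|.
    rewrite (bigD1 i) //= sub0r normrN lerDl sumr_ge0 // => k _.
  have HMd : c <= M * \sum_k `|0 - T x k|.
    apply: (le_trans (ler_norm c)).
    have -> : `|c| = M * d by rewrite /M divfK // gt_eqF.
    by apply: ler_wpM2l => //; apply: le_trans Hi' Hsum.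
  rewrite -[c%:E]add0e; apply: leeD => //; by rewrite lee_fin.
have pT : forall x, ((pr (T x))%:E <= f x)%E.
  move=> x; rewrite -gE; apply: le_trans (ereal_inf_lbound _) _.
    by exists x.
  rewrite /term big1 ?mulr0 ?adde0 // => i _; by rewrite subrr normr0.
pose xi := \sum_i a i *: zz i.
exists xi => x.
have key : pp xi x - pp xi j = \sum_i a i * T x i.
  by rewrite -ppBr pp_sum; apply: eq_bigr => i _; rewrite ppZl.
have H1 : c + \sum_i a i * T x i <= pr (T x).
  by apply: le_trans (Ha (T x)); rewrite lerD2r.
have H := pT x.
move: H (f0 x); case: (f x) => [r| |] //= H _.
  rewrite -EFinB lee_fin; rewrite lee_fin in H; lra.
by rewrite leNye.
Qed.

End Biconj.
Lemma ereal_lin (R : realType) (x : \bar R) (a b c m g : R) : a + b - c + m - g = 0 ->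
  x = (x + a%:E + b%:E - c%:E + m%:E - g%:E)%E.
Proof.
case: x => [r| |] H //=.
rewrite -!EFinD; congr EFin; lra.
Qed.
Lemma le_below (R : realType) (x y : \bar R) (k : R) :
  (forall c : R, (c%:E < x)%E -> ((c + k)%:E <= y)%E) -> (x + k%:E <= y)%E.
Proof.
case: x => [r| |] H.
- case: y H => [s| |] H.
  + rewrite -EFinD lee_fin; apply/ler_addgt0Pr => e e0.
    have := H (r - e); rewrite !lte_fin lee_fin => /(_ ltac:(lra)); lra.
  + exact: leey.
  + by have := H (r - 1); rewrite lte_fin => /(_ ltac:(lra)).
- case: y H => [s| |] H //=.
  + have := H (s - k + 1)%R (ltry _); rewrite lee_fin => h; exfalso; lra.
  + by have := H 0 (ltry _).
- by rewrite /= leNye.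
Qed.

Section Main.
Variables (R : realType) (S : state_flux_triple R)
  (L : forall rho, TW S rho -> \bar R).
Hypothesis HL : is_Lfunction L.
Variable rho : sZ S.
Local Notation X := (TW S rho).
Local Notation Xs := (TWs S rho).
Local Notation pp := (@pW R S rho).
Local Open Scope ereal_scope.

Lemma L_ge0 j : 0 <= L rho j.
Proof.
have [H0 _ _ _] := HL rho; rewrite -H0; apply: ereal_inf_lbound; by exists j.
Qed.

Lemma L_j0 : exists j0, L rho j0 = 0.
Proof. by have [_ [j0 [Hj0 _]] _ _] := HL rho; exists j0. Qed.

Lemma Hf_lb (xi : Xs) j : (pp xi j)%:E - L rho j <= Hf L xi.
Proof. by apply: ereal_sup_ubound; exists j. Qed.

Lemma Hf0 : Hf L (0%R : Xs) = 0.
Proof.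
apply/eqP; rewrite eq_le; apply/andP; split.
  apply: ge_ereal_sup => _ [j _ <-]; rewrite pp0l sub0e oppe_le0; exact: L_ge0.
have [j0 Hj0] := L_j0.
by apply: le_trans (Hf_lb 0%R j0); rewrite pp0l Hj0 sube0.
Qed.

Lemma Hf_half (w : Xs) : Hf L w <= 0 -> Hf L ((2^-1 : R) *: w) <= 0.
Proof.
move=> Hw; apply: ge_ereal_sup => _ [j _ <-].
have := le_trans (Hf_lb w j) Hw; have := L_ge0 j.
rewrite ppZl; case: (L rho j) => [r| |] //= r0.
  rewrite -!EFinB !lee_fin in r0 * => h; lra.
Qed.

Lemma Hf_real (w : Xs) : Hf L w <= 0 -> exists a : R, Hf L w = a%:E.
Proof.
move=> Hw; have [j0 Hj0] := L_j0; have := Hf_lb w j0.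
rewrite Hj0 sube0; move: Hw; case: (Hf L w) => [a| |] //; by exists a.
Qed.

Lemma grad (dL0 : Xs) : LGateaux0 L dL0 ->
  exists A : R, L rho 0%R = A%:E /\ forall j, (A + pp dL0 j)%:E <= L rho j.
Proof.
move=> HG.
have [A LA] : exists A : R, L rho 0%R = A%:E.
  have := L_ge0 0%R; case E: (L rho 0%R) => [A| |] // _; first by exists A.
  have ql : (pp dL0 0%R - 1 < pp dL0 0%R)%R by lra.
  have [h [/andP[h0 h1] Hh]] := @near0'_pos R _ (@cvg_gt_near R _ _ _ (HG 0%R) ql).
  move: Hh; rewrite scaler0 E /= mulNyr gtr0_sg ?invr_gt0 // mul1e.
  by rewrite ltNge leNye.
exists A; split => // j.
have := L_ge0 j; case Ej: (L rho j) => [r| |] // _; last exact: leey.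
rewrite lee_fin leNgt; apply/negP => Hlt.
have ql : (r - A < pp dL0 j)%R by lra.
have [h [/andP[h0 h1] Hh]] := @near0'_pos R _ (@cvg_gt_near R _ _ _ (HG j) ql).
have [_ _ Hc _] := HL rho.
have := Hc h j 0%R (introT andP (conj h0 h1)).
rewrite scaler0 addr0 Ej LA -!EFinM -EFinD => Hcv.
rewrite LA in Hh.
have := L_ge0 (h *: j); move: Hh Hcv; case: (L rho (h *: j)) => [b| |].
- rewrite -EFinB -EFinM !lte_fin !lee_fin ltr_pdivlMr // => Hh Hcv _. move: Hh Hcv h0 h1. clear. move=> Hh Hcv h0 h1. lra.
- by move=> _; rewrite leye_eq.
- by move=> _ _; rewrite leNgt ltNyr.
Qed.

Lemma Hf_dL0 (dL0 : Xs) (A : R) : L rho 0%R = A%:E ->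
  (forall j, (A + pp dL0 j)%:E <= L rho j) -> Hf L dL0 = (- A)%:E.
Proof.
move=> LA Hg; apply/eqP; rewrite eq_le; apply/andP; split.
  apply: ge_ereal_sup => _ [j _ <-]; have := Hg j; case: (L rho j) => [r| |] //=.
  - rewrite -EFinB !lee_fin => h; lra.
  - by rewrite ?leNye.
by apply: le_trans (Hf_lb dL0 0%R); rewrite pp0r LA sub0e EFinN.
Qed.

Lemma Phi_eq (F : Xs) (A : R) : Hf L (- F)%R = (- A)%:E ->
  forall j, Phi L F j = L rho j + (pp F j - A)%:E.
Proof.
move=> HF j.
have PS : forall z, PhiS L F z = Hf L (z - F)%R + A%:E.
  by move=> z; rewrite /PhiS HF -EFinN opprK.
have [Hinf [j0 [Hj0 _]] Hc Hl] := HL rho.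
apply/eqP; rewrite eq_le; apply/andP; split.
- apply: ge_ereal_sup => _ [z _ <-]; rewrite PS.
  have := Hf_lb (z - F)%R j; rewrite ppBl.
  have := L_ge0 j.
  case: (L rho j) => [r| |] // _.
  + case: (Hf L (z - F)%R) => [h| |] //=.
    * rewrite -?EFinD -?EFinB ?lee_fin => H; lra.
    * by rewrite addeNy leNye.
  + by move=> _; rewrite addye // leey.
- apply: le_below => c cL.
  have [xi Hxi] := @biconj R S rho (L rho) L_ge0 (ex_intro _ j0 Hj0) Hc Hl j c cL.
  have Hxi' : Hf L xi <= (pp xi j - c)%:E.
    by apply: ge_ereal_sup => _ [x _ <-]; exact: Hxi.
  apply: le_ereal_sup_tmp.
  exists ((pp (xi + F)%R j)%:E - PhiS L F (xi + F)%R); first by exists (xi + F)%R.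
  rewrite PS addrK ppDl.
  move: Hxi'; case: (Hf L xi) => [h| |] //=.
  + rewrite -?EFinD -?EFinB ?lee_fin => H; lra.
  + by rewrite leey.
Qed.

End Main.
Arguments grad {R S L} HL {rho dL0}.
Arguments Hf_dL0 {R S L rho dL0 A}.
Arguments Phi_eq {R S L} HL {rho F A}.
Arguments Hf_real {R S L} HL {rho w}.
Arguments Hf_half {R S L} HL {rho w}.
Arguments Hf0 {R S L} HL {rho}.
End Helpers.
Import Helpers.

Local Open Scope ring_scope.
Local Open Scope ereal_scope.

Theorem corollary2p25 (R : realType) (S : state_flux_triple R)
  (L : forall rho, TW S rho -> \bar R) (V : sZ S -> \bar R) :
  is_Lfunction L -> is_quasipotential L V ->
  (* rho in Dom(F^asym): dL(rho,0) = dL0, dV(rho) = dV *)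
  (forall (rho : sZ S) (dL0 : TWs S rho) (dV : TZs S rho),
     LGateaux0 L dL0 -> gderivZ S V rho dV ->
     let F := (- dL0)%R in
     let Fsym := (- ((2^-1 : R) *: dphiT S dV))%R in
     let Fasym := (F - Fsym)%R in
     forall j : TW S rho,
       L rho j = Phi L F j + PhiS L F Fasym - (pW S Fasym j)%:E
                 + PhiSmod L F Fasym Fsym - (pW S Fsym j)%:E)
  /\
  (* rho in Dom_symdiss(F^asym) *)
  (forall (rho : sZ S) (dL0 : TWs S rho) (dV : TZs S rho),
     LGateaux0 L dL0 -> gderivZ S V rho dV -> symdiss L (- dL0)%R ->
     let F := (- dL0)%R in
     let Fsym := (- ((2^-1 : R) *: dphiT S dV))%R in
     let Fasym := (F - Fsym)%R in
     forall j : TW S rho,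
       L rho j = Phi L F j + PhiS L F Fsym - (pW S Fsym j)%:E
                 + PhiSmod L F Fsym Fasym - (pW S Fasym j)%:E).

Proof.
have h2 : (2^-1 + 2^-1 : R)%R = 1%R by rewrite -div1r -splitr.
move=> HL [_ HV]; split.
- move=> rho dL0 dV HG HdV F Fsym Fasym j.
  have [A [LA Hg]] := grad HL HG.
  have HF : Hf L (- F)%R = (- A)%:E by rewrite /F opprK; exact: Hf_dL0 LA Hg.
  have HPhi := Phi_eq HL HF j.
  have PS : forall z, PhiS L F z = Hf L (z - F)%R + A%:E.
    by move=> z; rewrite /PhiS HF EFinN oppeK.
  set w := dphiT S dV.
  have Hw : Hf L w = 0 := HV rho dV HdV.
  have e1 : (Fasym - F = 2^-1 *: w)%R by rewrite /Fasym /Fsym addrAC subrr add0r opprK.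
  have [a1 Ha1] : exists a1 : R, Hf L (2^-1 *: w)%R = a1%:E.
    by apply: (Hf_real HL); apply: (Hf_half HL); rewrite Hw.
  have e2 : (Fsym + Fasym - F = 0)%R by rewrite /Fasym addrCA subrr addr0 subrr.
  have e3 : (- Fsym + Fasym - F = w)%R.
    rewrite /Fasym /Fsym /F !opprK addrCA addrAC addNr add0r.
    by rewrite -scalerDl h2 scale1r.
  rewrite /PhiSmod HPhi !PS e1 e2 e3 Ha1 (Hf0 HL) Hw !add0e -!EFinD.
  apply: ereal_lin; rewrite /Fasym ppBl; lra.
- move=> rho dL0 dV HG HdV Hsym F Fsym Fasym j.
  have [A [LA Hg]] := grad HL HG.
  have HF : Hf L (- F)%R = (- A)%:E by rewrite /F opprK; exact: Hf_dL0 LA Hg.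
  have HPhi := Phi_eq HL HF j.
  have PS : forall z, PhiS L F z = Hf L (z - F)%R + A%:E.
    by move=> z; rewrite /PhiS HF EFinN oppeK.
  set w := dphiT S dV.
  have Hw : Hf L w = 0 := HV rho dV HdV.
  set u := ((Fsym - F) + (Fsym - F))%R.
  have Hz : Hf L ((Fsym + Fsym - F) - F)%R = Hf L (- (Fsym + Fsym - F) - F)%R := Hsym _.
  have e4 : ((Fsym + Fsym - F) - F = u)%R by rewrite /u addrACA addrA.
  have e5 : (- (Fsym + Fsym - F) - F = w)%R.
    rewrite opprB addrAC subrr add0r opprD /Fsym !opprK.
    by rewrite -scalerDl h2 scale1r.
  have Hu : Hf L u = 0 by rewrite -e4 Hz e5 Hw.
  have eu : (- Fasym + Fsym - F = u)%R by rewrite /Fasym opprB /u addrA.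
  have ehalf : (Fsym - F = 2^-1 *: u)%R by rewrite /u scalerDr -scalerDl h2 scale1r.
  have [a2 Ha2] : exists a2 : R, Hf L (Fsym - F)%R = a2%:E.
    by rewrite ehalf; apply: (Hf_real HL); apply: (Hf_half HL); rewrite Hu.
  have e6 : (Fasym + Fsym - F = 0)%R by rewrite /Fasym subrK subrr.
  rewrite /PhiSmod HPhi !PS e6 eu Ha2 (Hf0 HL) Hu !add0e -!EFinD.
  apply: ereal_lin; rewrite /Fasym ppBl; lra.
Qed.
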